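(* Let $n\ge 2$ and $\delta=\sigma_{n-1}\cdots\sigma_1\in B_n$. Then $\#(USS(\delta))=2^{n-2}$.
   Context: $B_n$ is Artin's braid group with generators $\sigma_1,\ldots,\sigma_{n-1}$, with its classical Garside structure (positive monoid generated by the $\sigma_i$, Garside element $\Delta=\sigma_1(\sigma_2\sigma_1)\cdots(\sigma_{n-1}\cdots\sigma_1)$). Every braid has a unique left normal form $Y=\Delta^p y_1\cdots y_r$ ($p$ maximal, each $y_i\neq 1,\Delta$ a simple braid, i.e. a positive prefix of $\Delta$, and the maximal simple prefix of $y_i\cdots y_r$); $\ell(Y)=r$ is the canonical length. With $\tau(Z)=\Delta^{-1}Z\Delta$, the cycling is $\mathbf c(Y)=\Delta^p y_2\cdots y_r\tau^{-p}(y_1)$. The ultra summit set $USS(X)$ is the set of conjugates $Y$ of $X$ with $\ell(Y)$ minimal in the conjugacy class and $\mathbf c^m(Y)=Y$ for some $m\ge1$. *)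

(* Defs.v *)
(* Artin braid group B_n given by its standard presentation,
   elements represented by words modulo the congruence generated by the relations. *)
From mathcomp Require Import all_boot all_order all_algebra.
Set Implicit Arguments. Unset Strict Implicit. Unset Printing Implicit Defensive.
Import Order.TTheory GRing.Theory Num.Theory.

(* A letter (i, true) is sigma_i, (i, false) is sigma_i^{-1}. *)
Definition word := seq (nat * bool).

Definition valid (n : nat) (w : word) : bool :=
  all (fun l => (1 <= l.1) && (l.1 <= n.-1)) w.

Definition winv (w : word) : word := rev (map (fun l => (l.1, ~~ l.2)) w).

Inductive beq (n : nat) : word -> word -> Prop :=
| beq_refl w : beq n w w
| beq_sym u v : beq n u v -> beq n v u
| beq_trans u v w : beq n u v -> beq n v w -> beq n u w
| beq_ctx a b u v : beq n u v -> beq n (a ++ u ++ b) (a ++ v ++ b)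
| beq_cancel i b : 1 <= i -> i <= n.-1 -> beq n [:: (i, b); (i, ~~ b)] [::]
| beq_comm i j : 1 <= i -> i <= n.-1 -> 1 <= j -> j <= n.-1 -> (i.+1 < j) || (j.+1 < i) ->
    beq n [:: (i, true); (j, true)] [:: (j, true); (i, true)]
| beq_braid i : 1 <= i -> i.+1 <= n.-1 ->
    beq n [:: (i, true); (i.+1, true); (i, true)] [:: (i.+1, true); (i, true); (i.+1, true)].

(* Garside element Delta = s1 (s2 s1) ... (s_{n-1} ... s1). *)
Definition Delta (n : nat) : word :=
  flatten [seq [seq (j.+1, true) | j <- rev (iota 0 k)] | k <- iota 1 n.-1].

Definition Deltapow (n : nat) (p : int) : word :=
  match p with
  | Posz k => flatten (nseq k (Delta n))
  | Negz k => flatten (nseq k.+1 (winv (Delta n)))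
  end.

Definition positive (n : nat) (w : word) : Prop :=
  exists u, valid n u /\ all (fun l => l.2) u /\ beq n w u.

Definition prefix (n : nat) (a b : word) : Prop := positive n (winv a ++ b).

Definition simple (n : nat) (s : word) : Prop :=
  valid n s /\ positive n s /\ prefix n s (Delta n).

Definition NF (n : nat) (Y : word) (p : int) (ys : seq word) : Prop :=
  beq n Y (Deltapow n p ++ flatten ys) /\
  (forall q : int, positive n (Deltapow n (- q)%R ++ Y) -> (q <= p)%R) /\
  (forall y, y \in ys -> simple n y /\ ~ beq n y [::] /\ ~ beq n y (Delta n)) /\
  (forall i, i < size ys ->
     forall t, simple n t -> prefix n t (flatten (drop i ys)) ->
       prefix n t (nth [::] ys i)).

Definition canlen (n : nat) (Y : word) (r : nat) : Prop :=
  exists p ys, NF n Y p ys /\ size ys = r.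

(* cycling; convention c(Delta^p) = Delta^p when r = 0.
   tau^{-p}(y) = Delta^p y Delta^{-p}. *)
Definition cyc (n : nat) (Y Z : word) : Prop :=
  exists p ys, NF n Y p ys /\
    match ys with
    | [::] => beq n Z Y
    | y1 :: rest =>
        beq n Z (Deltapow n p ++ flatten rest ++ Deltapow n p ++ y1 ++ Deltapow n (- p)%R)
    end.

Fixpoint cyc_iter (n m : nat) (Y Z : word) : Prop :=
  match m with
  | 0 => beq n Y Z
  | m'.+1 => exists W, valid n W /\ cyc n Y W /\ cyc_iter n m' W Z
  end.

Definition conjugate (n : nat) (X Y : word) : Prop :=
  exists w, valid n w /\ beq n Y (winv w ++ X ++ w).

Definition USS (n : nat) (X Y : word) : Prop :=
  valid n Y /\ conjugate n X Y /\
  (forall Z r r', valid n Z -> conjugate n X Z -> canlen n Y r -> canlen n Z r' -> r <= r') /\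
  (exists m, 0 < m /\ cyc_iter n m Y Y).

Definition card_Bn (n : nat) (P : word -> Prop) (N : nat) : Prop :=
  exists L : seq word, size L = N /\
    (forall i, i < N -> valid n (nth [::] L i) /\ P (nth [::] L i)) /\
    (forall i j, i < N -> j < N -> beq n (nth [::] L i) (nth [::] L j) -> i = j) /\
    (forall Y, valid n Y -> P Y -> exists i, i < N /\ beq n Y (nth [::] L i)).

Definition delta (n : nat) : word := [seq (i, true) | i <- rev (iota 1 n.-1)].

(* Main.v *)
Require Import Defs.
From mathcomp Require Import all_boot all_order all_algebra.
From mathcomp Require Import zify.
From Stdlib Require Import Setoid Morphisms.
Import Order.TTheory GRing.Theory Num.Theory.
Set Implicit Arguments. Unset Strict Implicit.

#[export] Hint Resolve beq_refl : core.

#[export] Instance beq_equiv n : Equivalence (beq n).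
Proof. split. exact: beq_refl. exact: beq_sym. exact: beq_trans. Qed.

#[export] Instance cat_proper n : Proper (beq n ==> beq n ==> beq n) (@cat (nat * bool)).
Proof.
move=> a a' Ha b b' Hb.
apply: (beq_trans (v := a' ++ b)).
  have := beq_ctx [::] b Ha. by rewrite /=.
have := beq_ctx a' [::] Hb. by rewrite !cats0.
Qed.

#[export] Instance cons_proper n l : Proper (beq n ==> beq n) (cons l).
Proof. move=> a b H. have := @cat_proper n _ _ (beq_refl n [:: l]) _ _ H. by []. Qed.

Definition lsign (l : nat * bool) : int := if l.2 then 1%R else (-1)%R.
Fixpoint es (w : word) : int := match w with [::] => 0%R | l :: w' => (lsign l + es w')%R end.

Lemma es_cat u v : es (u ++ v) = (es u + es v)%R.
Proof. elim: u => [|l u IH] /=; first by rewrite add0r. by rewrite IH addrA. Qed.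

Lemma beq_es n u v : beq n u v -> es u = es v.
Proof.
elim=> {u v} [w|u v _ IH|u v w _ IH1 _ IH2|a b u v _ IH|i b _ _|i j _ _ _ _ _|i _ _] //=.
- by rewrite IH1 IH2.
- by rewrite !es_cat IH.
- by case: b; rewrite /lsign /=; lia.
Qed.

Lemma es_pos u : all (fun l => l.2) u -> es u = Posz (size u).
Proof.
elim: u => [|[i b] u IH] //= /andP [/= -> /IH ->]. rewrite /lsign /=. lia.
Qed.

Lemma positive_beq n w w' : beq n w w' -> positive n w -> positive n w'.
Proof. move=> H [u [Hv [Ha Hb]]]. exists u; split=> //; split=> //. by rewrite -H. Qed.

Lemma positive_es n w : positive n w -> (0 <= es w)%R.
Proof. move=> [u [_ [Ha Hb]]]. rewrite (beq_es Hb) es_pos //. Qed.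

Lemma positive_es0 n w : positive n w -> es w = 0%R -> beq n w [::].
Proof.
move=> [u [_ [Ha Hb]]]. rewrite (beq_es Hb) es_pos //. case: u Ha Hb => //.
Qed.

Definition swap (j x : nat) : nat := if x == j then j.+1 else if x == j.+1 then j else x.
Definition fw (w : word) (x : nat) : nat := foldl (fun y l => swap l.1 y) x w.

Lemma fw_cat u v x : fw (u ++ v) x = fw v (fw u x).
Proof. by rewrite /fw foldl_cat. Qed.

Lemma fw_cons l u x : fw (l :: u) x = fw u (swap l.1 x).
Proof. by []. Qed.

Ltac swap_tac := rewrite /swap; repeat (match goal with |- context [?a == ?b] =>
   lazymatch a with context [if _ then _ else _] => fail | _ =>
   lazymatch b with context [if _ then _ else _] => fail | _ => case: (@eqP nat a b) => ? end end end; simpl); lia.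

Lemma beq_fw n u v : beq n u v -> forall x, fw u x = fw v x.
Proof.
elim=> {u v} [w|u v _ IH|u v w _ IH1 _ IH2|a b u v _ IH|i b _ _|i j _ _ _ _ H|i _ _] //= x.
- by rewrite IH1 IH2.
- by rewrite !fw_cat IH.
- rewrite /fw /=. swap_tac.
- rewrite /fw /=. move: H. swap_tac.
- rewrite /fw /=. swap_tac.
Qed.

Lemma winv_cat u v : winv (u ++ v) = winv v ++ winv u.
Proof. by rewrite /winv map_cat rev_cat. Qed.

Lemma winv_cons l u : winv (l :: u) = winv u ++ [:: (l.1, ~~ l.2)].
Proof. by rewrite /winv /= rev_cons cats1. Qed.

Lemma valid_cons n l u : valid n (l :: u) = (1 <= l.1 <= n.-1) && valid n u.
Proof. by []. Qed.

Lemma valid_cat n u v : valid n (u ++ v) = valid n u && valid n v.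
Proof. by rewrite /valid all_cat. Qed.

Lemma winv_l n w : valid n w -> beq n (winv w ++ w) [::].
Proof.
elim: w => [|[i b] w IH]; first by move=> _; reflexivity.
rewrite valid_cons => /andP [/andP [H1 H2] Hw].
rewrite winv_cons -catA /=.
have E : beq n [:: (i, ~~ b), (i, b) & w] w.
  have := beq_ctx [::] w (beq_cancel (~~ b) H1 H2). by rewrite negbK.
by rewrite E (IH Hw).
Qed.

Lemma winv_r n w : valid n w -> beq n (w ++ winv w) [::].
Proof.
elim: w => [|[i b] w IH]; first by move=> _; reflexivity.
rewrite valid_cons => /andP [/andP [H1 H2] Hw].
rewrite winv_cons catA /= (IH Hw) /=. exact: beq_cancel.
Qed.

Lemma cancel_l n u a b : valid n u -> beq n (u ++ a) (u ++ b) -> beq n a b.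
Proof.
move=> Hu H.
have E : forall c, beq n c (winv u ++ u ++ c).
  move=> c. by rewrite catA winv_l.
by rewrite (E a) H -E.
Qed.

Lemma cancel_r n u a b : valid n u -> beq n (a ++ u) (b ++ u) -> beq n a b.
Proof.
move=> Hu H.
have E : forall c, beq n c (c ++ u ++ winv u).
  move=> c. by rewrite winv_r // cats0.
by rewrite (E a) catA H -catA -E.
Qed.

Lemma valid_winv n w : valid n (winv w) = valid n w.
Proof. by rewrite /valid /winv all_rev all_map. Qed.

Lemma es_winv w : es (winv w) = (- es w)%R.
Proof.
elim: w => [|[i b] w IH] //=. rewrite winv_cons es_cat IH /= /lsign /=. case: b => /=; lia.
Qed.

Lemma beq_catl n a u v : beq n u v -> beq n (a ++ u) (a ++ v).
Proof. move=> H. by rewrite H. Qed.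
Lemma beq_catr n a u v : beq n u v -> beq n (u ++ a) (v ++ a).
Proof. move=> H. by rewrite H. Qed.
Arguments Delta : simpl never.

#[export] Instance positive_proper n : Proper (beq n ==> iff) (positive n).
Proof. move=> a b H. split; [exact: positive_beq | apply: positive_beq; exact: beq_sym]. Qed.

Set Implicit Arguments. Unset Strict Implicit.

Definition pw (m : nat) (w : word) : bool := all (fun l => l.2 && (0 < l.1 <= m)) w.

Lemma pw_cat m u v : pw m (u ++ v) = pw m u && pw m v.
Proof. by rewrite /pw all_cat. Qed.
Lemma pw_cons m l u : pw m (l :: u) = [&& l.2, 0 < l.1 <= m & pw m u].
Proof. by rewrite /pw /= -andbA. Qed.
Lemma pw_mono a b w : a <= b -> pw a w -> pw b w.
Proof.
move=> Hab; elim: w => //= l w IH /andP [/andP [-> /andP [H1 H2]] /IH ->].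
by rewrite H1 (leq_trans H2 Hab).
Qed.
Lemma pw_valid n m w : m <= n.-1 -> pw m w -> valid n w.
Proof.
move=> Hm; elim: w => //= l w IH /andP [/andP [_ /andP [H1 H2]] /IH ->].
by rewrite H1 (leq_trans H2 Hm).
Qed.
Lemma pw_all m w : pw m w -> all (fun l => l.2) w.
Proof. by elim: w => //= l w IH /andP [/andP [-> _] /IH]. Qed.

Lemma comm_word n i lo hi w :
  0 < i <= n.-1 -> 0 < lo -> hi <= n.-1 ->
  all (fun l => l.2 && (lo <= l.1 <= hi)) w -> (hi.+2 <= i) || (i.+2 <= lo) ->
  beq n ((i, true) :: w) (w ++ [:: (i, true)]).
Proof.
move=> Hi Hlo Hhi; elim: w => //= [[j b] w] IH /andP [/andP [/= Hb Hj] Hw] Hsep.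
move: Hb => /= ->.
have E : beq n [:: (i, true), (j, true) & w] [:: (j, true), (i, true) & w].
  have := beq_ctx [::] w (@beq_comm n i j _ _ _ _ _); rewrite /=; apply; lia.
by rewrite E (IH Hw Hsep).
Qed.

Lemma comm_word_lo n i m w : 0 < i <= n.-1 -> pw m w -> m.+2 <= i ->
  beq n ((i, true) :: w) (w ++ [:: (i, true)]).
Proof.
move=> Hi Hw Hm. apply: (@comm_word n i 1 m) => //.
- lia.
- by rewrite Hm.
Qed.

Definition Dw (k : nat) : word := [seq (i, true) | i <- rev (iota 1 k)].
Definition Iw (k : nat) : word := [seq (i, true) | i <- iota 1 k].

Arguments Delta : simpl never.
Arguments Dw : simpl never.
Arguments Iw : simpl never.

Lemma iotaS1 k : iota 1 k.+1 = iota 1 k ++ [:: k.+1].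
Proof. by rewrite -[k.+1]addn1 iotaD add1n addn1. Qed.

Lemma DwS k : Dw k.+1 = (k.+1, true) :: Dw k.
Proof. by rewrite /Dw iotaS1 rev_cat. Qed.
Lemma IwS k : Iw k.+1 = Iw k ++ [:: (k.+1, true)].
Proof. by rewrite /Iw iotaS1 map_cat. Qed.

Lemma pw_Dw k : pw k (Dw k).
Proof.
elim: k => // k IH. rewrite DwS pw_cons /= (pw_mono (leqnSn k) IH). by rewrite leqnn.
Qed.
Lemma pw_Iw k : pw k (Iw k).
Proof.
elim: k => // k IH. rewrite IwS pw_cat (pw_mono (leqnSn k) IH) /=. by rewrite leqnn.
Qed.

Lemma DeltaS k : Delta k.+1 = Delta k ++ Dw k.
Proof.
rewrite /Delta. case: k => [|k] //.
rewrite -pred_Sn. rewrite -pred_Sn.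
rewrite iotaS1 map_cat flatten_cat /= cats0. congr (_ ++ _).
rewrite /Dw. have -> : iota 1 k.+1 = map succn (iota 0 k.+1) by rewrite -(iotaDl 1).
rewrite -map_rev -map_comp. by [].
Qed.

Lemma pw_Delta k : pw k.-1 (Delta k).
Proof.
elim: k => [|k IH]; first by [].
rewrite DeltaS pw_cat pw_Dw andbT. case: k IH => // k IH. exact: pw_mono IH.
Qed.

Lemma D_lemma n j k : 0 < j -> j < k -> k <= n.-1 ->
  beq n ((j, true) :: Dw k) (Dw k ++ [:: (j.+1, true)]).
Proof.
move=> Hj; elim: k => // k IH Hjk Hk.
rewrite DwS.
case: (ltngtP j k) => [Hlt|Hgt|Heq].
- have E : beq n [:: (j, true), (k.+1, true) & Dw k] [:: (k.+1, true), (j, true) & Dw k].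
    have := beq_ctx [::] (Dw k) (@beq_comm n j k.+1 _ _ _ _ _); rewrite /=; apply; lia.
  rewrite E /=. apply: cons_proper. apply: IH => //. lia.
- lia.
- subst k. case: j Hj IH Hjk Hk => // j _ _ _ Hk.
  rewrite DwS.
  have E : beq n [:: (j.+1, true), (j.+2, true), (j.+1, true) & Dw j]
                 [:: (j.+2, true), (j.+1, true), (j.+2, true) & Dw j].
    have := beq_ctx [::] (Dw j) (@beq_braid n j.+1 _ _); rewrite /=; apply; lia.
  rewrite E /=. do 2 apply: cons_proper. apply: (@comm_word_lo n _ j) => //; solve [exact: pw_Dw | lia].
Qed.

Lemma I_lemma n j k : 0 < j -> j < k -> k <= n.-1 ->
  beq n ((j.+1, true) :: Iw k) (Iw k ++ [:: (j, true)]).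
Proof.
move=> Hj; elim: k => // k IH Hjk Hk.
rewrite IwS.
case: (ltngtP j k) => [Hlt|Hgt|Heq].
- have E := IH Hlt (ltnW Hk).
  have := cat_proper E (beq_refl n [:: (k.+1, true)]). rewrite /= => ->.
  rewrite -!catA /=. apply: cat_proper => //.
  have := @beq_comm n j k.+1 _ _ _ _ _. apply; lia.
- lia.
- subst k. case: j Hj IH Hjk Hk => // j _ _ _ Hk.
  rewrite IwS -catA /=.
  have E : beq n ((j.+2, true) :: Iw j) (Iw j ++ [:: (j.+2, true)]).
    apply: (@comm_word_lo n _ j) => //; solve [exact: pw_Iw | lia].
  have := cat_proper E (beq_refl n [:: (j.+1, true); (j.+2, true)]).
  rewrite /= => ->. rewrite -!catA /=. apply: cat_proper => //.
  apply: beq_sym. apply: beq_braid; lia.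
Qed.

Lemma Delta_I n k : k.+1 <= n -> beq n (Delta k.+1) (Iw k ++ Delta k).
Proof.
elim: k => [|k IH] Hk; first by [].
rewrite {1}DeltaS {1}IH; last lia.
rewrite DeltaS DwS IwS -!catA. apply: beq_catl => /=.
case: k IH Hk => [|k] IH Hk; first by [].
have E : beq n ((k.+2, true) :: Delta k.+1) (Delta k.+1 ++ [:: (k.+2, true)]).
  apply: (@comm_word_lo n _ k) => //; [lia|exact: pw_Delta].
by rewrite -(cat1s _ (Dw k.+1)) catA -E.
Qed.

Lemma tau_letter n M : M <= n -> forall j, 0 < j < M ->
  beq n ((j, true) :: Delta M) (Delta M ++ [:: (M - j, true)]).
Proof.
elim: M => [|M IH] HM j /andP [Hj HjM]; first by [].
case: j Hj HjM => // j _ HjM.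
case: j HjM => [|j] HjM.
-
  rewrite DeltaS.
  case: M IH HM HjM => [|M] IH HM HjM; first by [].
  case: M IH HM HjM => [|M] IH HM HjM; first by rewrite /=.
  have E := IH (ltnW HM) 1 isT.
  rewrite -cat_cons (cat_proper E (beq_refl n (Dw M.+2))) -!catA. apply: (@beq_catl n (Delta M.+2)) => /=.
  have -> : M.+2 - 1 = M.+1 by lia.
  have -> : M.+3 - 1 = M.+2 by lia.
  apply: D_lemma; lia.
- rewrite (Delta_I HM).
  have E := @I_lemma n j.+1 M isT ltac:(lia) ltac:(lia).
  rewrite -cat_cons (cat_proper E (beq_refl n (Delta M))) -!catA. apply: (@beq_catl n (Iw M)) => /=.
  have -> : M.+1 - j.+2 = M - j.+1 by lia. apply: IH; lia.
Qed.

Definition tau (M : nat) (w : word) : word := [seq (M - l.1, l.2) | l <- w].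

Lemma tau_cat M u v : tau M (u ++ v) = tau M u ++ tau M v.
Proof. by rewrite /tau map_cat. Qed.

Lemma pw_tau M w : pw M.-1 w -> pw M.-1 (tau M w).
Proof.
elim: w => // [[i b]] w IH /andP [/andP [/= Hb /andP [H1 H2]] Hw] /=.
rewrite Hb (IH Hw) /=. lia.
Qed.

Lemma tauK M w : pw M.-1 w -> tau M (tau M w) = w.
Proof.
elim: w => // [[i b]] w IH /andP [/andP [/= Hb /andP [H1 H2]] Hw] /=.
rewrite (IH Hw). congr ((_, _) :: _). lia.
Qed.

Lemma tau_word n M x : M <= n -> pw M.-1 x -> beq n (x ++ Delta M) (Delta M ++ tau M x).
Proof.
move=> HM; elim: x => [|[i b] x IH]; first by rewrite cats0.
move=> /andP [/andP [/= Hb /andP [H1 H2]] Hx]. move: Hb => /= ->.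
rewrite /= IH //.
have := cat_proper (@tau_letter n M HM i ltac:(lia)) (beq_refl n (tau M x)).
rewrite -!catA /= => ->. done.
Qed.

Lemma SP n M u v : M <= n -> pw M.-1 u -> pw M.-1 v ->
  beq n (Delta M) (u ++ v) -> beq n (Delta M) (v ++ tau M u).
Proof.
move=> HM Hu Hv H.
have Vu : valid n u by apply: pw_valid Hu; lia.
apply: (cancel_l Vu).
have -> : u ++ v ++ tau M u = (u ++ v) ++ tau M u by rewrite catA.
rewrite -H. exact: tau_word.
Qed.

Set Implicit Arguments. Unset Strict Implicit.

Fixpoint cox (b : nat -> bool) (m : nat) : word :=
  if m is m'.+1 then (if b m then cox b m' ++ [:: (m, true)] else (m, true) :: cox b m')
  else [::].

Lemma pw_cox b m : pw m (cox b m).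
Proof.
elim: m => // m IH /=. have H := pw_mono (leqnSn m) IH.
case: (b m.+1); rewrite ?pw_cat ?pw_cons H /= leqnn //.
Qed.

Lemma cox_simple n b m : m.+1 <= n -> exists y, pw m y /\ beq n (Delta m.+1) (cox b m ++ y).
Proof.
elim: m => [|m IH] Hm; first by exists [::].
have [y [Hy H]] := IH (ltnW Hm).
have Hc := pw_cox b m.
have Hm1 : m.+1 <= n by lia.
rewrite /=. case: (b m.+1).
- have H1 := SP Hm1 Hc Hy H.
  have Htc : pw m (tau m.+1 (cox b m)) := @pw_tau m.+1 _ Hc.
  have Hty : pw m (tau m.+1 y) := @pw_tau m.+1 _ Hy.
  have H2 := SP Hm1 Hy Htc H1.
  have H3 := SP Hm1 Htc Hty H2.
  rewrite tauK // in H3.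
  have H4 : beq n (Delta m.+2) (tau m.+1 y ++ (cox b m ++ (m.+1, true) :: Dw m)).
    by rewrite DeltaS H3 DwS catA.
  have Hu : pw (m.+2).-1 (tau m.+1 y) := pw_mono (leqnSn m) Hty.
  have Hv : pw (m.+2).-1 (cox b m ++ (m.+1, true) :: Dw m).
    rewrite /= pw_cat pw_cons (pw_mono (leqnSn m) Hc) /= leqnn /=.
    exact: pw_mono (leqnSn m) (pw_Dw m).
  have H5 := SP Hm Hu Hv H4.
  exists (Dw m ++ tau m.+2 (tau m.+1 y)). split.
    rewrite pw_cat (pw_mono (leqnSn m) (pw_Dw m)) /=. exact: (@pw_tau m.+2 _ Hu).
  by rewrite H5 -!catA.
- have H4 : beq n (Delta m.+2) (Iw m ++ ((m.+1, true) :: cox b m ++ y)).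
    by rewrite Delta_I // H IwS -catA.
  have Hu : pw (m.+2).-1 (Iw m) := pw_mono (leqnSn m) (pw_Iw m).
  have Hv : pw (m.+2).-1 ((m.+1, true) :: cox b m ++ y).
    rewrite pw_cons pw_cat (pw_mono (leqnSn m) Hc) (pw_mono (leqnSn m) Hy) /=. lia.
  have H5 := SP Hm Hu Hv H4.
  exists (y ++ tau m.+2 (Iw m)). split.
    rewrite pw_cat (pw_mono (leqnSn m) Hy) /=. exact: (@pw_tau m.+2 _ Hu).
  by rewrite H5 /= -!catA.
Qed.

Set Implicit Arguments. Unset Strict Implicit.

Lemma cox_ext b b' m : (forall k, 1 < k <= m -> b k = b' k) -> cox b m = cox b' m.
Proof.
elim: m => [|m IH] H //=.
case: m IH H => [|m] IH H.
  by case: (b 1); case: (b' 1).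
rewrite H; last lia. rewrite IH // => k Hk. apply: H. lia.
Qed.

Definition upd (b : nat -> bool) (a : nat) (v : bool) : nat -> bool :=
  fun k => if k == a then v else b k.

Lemma cox_norm n m u : m <= n.-1 -> all (fun l => l.2) u -> uniq (map fst u) ->
  (forall l, (l \in map fst u) = (0 < l <= m)) -> exists b, beq n u (cox b m).
Proof.
elim: m u => [|m IH] u Hm Ha Hu Hmem.
  exists (fun _ => false). case: u Ha Hu Hmem => // l u _ _ Hmem.
  have := Hmem l.1. rewrite inE eqxx /=. lia.
have : m.+1 \in map fst u by rewrite Hmem; lia.
case/mapP => l Hl El.
case/splitPr: Hl Ha Hu Hmem => x y.
rewrite all_cat /= => /and3P [Hax Hl2 Hay].
have El' : l = (m.+1, true) by case: l El Hl2 => /= ? ? -> ->.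
subst l. clear El Hl2.
rewrite map_cat /= => Hu Hmem.
have Hperm : perm_eq (map fst x ++ m.+1 :: map fst y) (m.+1 :: map fst x ++ map fst y).
  by rewrite -cat1s perm_catCA.
move: (Hu); rewrite (perm_uniq Hperm) /= => /andP [Hnot Hu'].
have Hmem' : forall l, (l \in map fst (x ++ y)) = (0 < l <= m).
  move=> l. have := Hmem l. rewrite (perm_mem Hperm) inE map_cat.
  case: (eqVneq l m.+1) => [->|Hne] /=.
    by rewrite (negbTE Hnot) ltnn.
  move=> ->. lia.
have [b Hb] := IH (x ++ y) (ltnW Hm) ltac:(by rewrite all_cat Hax Hay) ltac:(by rewrite map_cat) Hmem'.
have Hdisj := Hu'. move: (Hu'); rewrite cat_uniq => /and3P [_ Hhas _].
case: (posnP m) => [Hm0|Hmpos].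
  subst m.
  have Ex : x = [::].
    destruct x as [|l x]; first done. have := Hmem' l.1. rewrite map_cat inE eqxx /=. lia.
  have Ey : y = [::].
    destruct y as [|l y]; first done. have := Hmem' l.1. rewrite map_cat mem_cat inE eqxx orbT /=. lia.
  subst x y. exists b. by case: (b 1).
have : m \in map fst (x ++ y) by rewrite Hmem'; lia.
rewrite map_cat mem_cat => /orP [Hx|Hy].
- exists (upd b m.+1 true).
  rewrite /= /upd eqxx (@cox_ext (fun k => if k == m.+1 then true else b k) b); last first.
    move=> k Hk. case: eqP => // ?; lia.
  have Hy' : all (fun l => l.2 && (1 <= l.1 <= m.-1)) y.
    apply/allP => l Hl. move/allP: Hay => /(_ l Hl) ->.
    have Hl1 : l.1 \in map fst y by apply/mapP; exists l.
    have := Hmem' l.1. rewrite map_cat mem_cat Hl1 orbT => /esym H.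
    have Hne : l.1 != m.
      apply/eqP => E. move/hasP: Hhas; apply. exists l.1 => //. by rewrite E.
    move: H Hne; set z := l.1; move=> H Hne; lia.
  have E : beq n ((m.+1, true) :: y) (y ++ [:: (m.+1, true)]).
    apply: (@comm_word n m.+1 1 m.-1) => //; try lia.
  by rewrite E catA Hb.
- exists (upd b m.+1 false).
  rewrite /= /upd eqxx (@cox_ext (fun k => if k == m.+1 then false else b k) b); last first.
    move=> k Hk. case: eqP => // ?; lia.
  have Hx' : all (fun l => l.2 && (1 <= l.1 <= m.-1)) x.
    apply/allP => l Hl. move/allP: Hax => /(_ l Hl) ->.
    have Hl1 : l.1 \in map fst x by apply/mapP; exists l.
    have := Hmem' l.1. rewrite map_cat mem_cat Hl1 /= => /esym H.
    have Hne : l.1 != m.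
      apply/eqP => E. move/hasP: Hhas; apply. exists m => //. by rewrite -E.
    move: H Hne; set z := l.1; move=> H Hne; lia.
  have E : beq n ((m.+1, true) :: x) (x ++ [:: (m.+1, true)]).
    apply: (@comm_word n m.+1 1 m.-1) => //; try lia.
  rewrite -cat1s catA -E /= -Hb. done.
Qed.

Set Implicit Arguments. Unset Strict Implicit.

Lemma coxS b m : cox b m.+1 = if b m.+1 then cox b m ++ [:: (m.+1, true)] else (m.+1, true) :: cox b m.
Proof. by []. Qed.
Arguments cox : simpl never.

Lemma conj_refl n X : conjugate n X X.
Proof. exists [::]; split => //. by rewrite /= cats0. Qed.

Lemma conj_trans n X Y Z : conjugate n X Y -> conjugate n Y Z -> conjugate n X Z.
Proof.
move=> [w1 [V1 H1]] [w2 [V2 H2]]. exists (w1 ++ w2); split.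
  by rewrite valid_cat V1 V2.
by rewrite H2 H1 winv_cat -!catA.
Qed.

Lemma conj_beq_r n X Y Y' : conjugate n X Y -> beq n Y Y' -> conjugate n X Y'.
Proof. move=> [w [V H]] E. exists w; split => //. by rewrite -E. Qed.

Lemma conj_beq_l n X X' Y : beq n X X' -> conjugate n X Y -> conjugate n X' Y.
Proof. move=> E [w [V H]]. exists w; split => //. by rewrite -E. Qed.

Lemma conj_rot n i X : 0 < i <= n.-1 -> conjugate n ((i, true) :: X) (X ++ [:: (i, true)]).
Proof.
move=> Hi. exists [:: (i, true)]; split; first by rewrite /valid /= Hi.
rewrite /winv /=.
have := beq_ctx [::] (X ++ [:: (i, true)]) (@beq_cancel n i false ltac:(lia) ltac:(lia)).
rewrite /= => ->. done.
Qed.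

Definition Hw (a d : nat) : word := [seq (i, true) | i <- rev (iota a.+1 d)].

Lemma HwS a d : Hw a d.+1 = (a + d.+1, true) :: Hw a d.
Proof. by rewrite /Hw -[d.+1]addn1 iotaD rev_cat /= addn1 addSnnS. Qed.

Lemma Hw_last a d : Hw a d.+1 = Hw a.+1 d ++ [:: (a.+1, true)].
Proof. by rewrite /Hw /= rev_cons map_rcons cats1. Qed.

Lemma cox_high b a d : (forall k, a < k <= a + d -> b k = false) ->
  cox b (a + d) = Hw a d ++ cox b a.
Proof.
elim: d => [|d IH] H; first by rewrite addn0.
rewrite addnS coxS H; last lia.
rewrite IH; last by move=> k Hk; apply: H; lia.
by rewrite HwS addnS.
Qed.

Lemma Hw_range a d : all (fun l => l.2 && (a.+1 <= l.1 <= a + d)) (Hw a d).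
Proof.
elim: d => [|d IH] //. rewrite HwS /=. apply/andP; split; first lia.
move: IH; apply: sub_all => l /andP [-> H] /=. lia.
Qed.

Lemma move_top n d : forall a (b : nat -> bool), 1 < a -> a + d <= n.-1 -> b a ->
  (forall k, a < k <= a + d -> b k = false) ->
  conjugate n (cox (upd b a false) (a + d)) (cox b (a + d)).
Proof.
elim: d => [|d IH] a b Ha Had Hba Hhi.
- rewrite addn0. case: a Ha Had Hba Hhi => // a Ha Had Hba Hhi.
  rewrite !coxS Hba /upd eqxx.
  rewrite (@cox_ext (fun k => if k == a.+1 then false else b k) b); last first.
    move=> k Hk. case: eqP => // ?; lia.
  apply: conj_rot. lia.
- case: a Ha Had Hba Hhi => // a Ha Had Hba Hhi.
  set b' := upd (upd b a.+1 false) a.+2 true.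
  have Hhi' : forall k, a.+2 < k <= a.+2 + d -> b' k = false.
    move=> k Hk. rewrite /b' /upd. case: eqP => ?; first lia. case: eqP => ?; first lia.
    apply: Hhi. lia.
  have Hb'2 : b' a.+2 by rewrite /b' /upd eqxx.
  have IH' := IH a.+2 b' ltac:(lia) ltac:(lia) Hb'2 Hhi'.
  have E1 : cox (upd b' a.+2 false) (a.+2 + d) = cox (upd b a.+1 false) (a.+1 + d.+1).
    rewrite addSnnS. apply: cox_ext => k Hk. rewrite /b' /upd.
    case: eqP => [->|?]; last by [].
    have -> : (a.+2 == a.+1) = false by apply/eqP; lia.
    symmetry. apply: Hhi. lia.
  rewrite E1 in IH'. apply: (conj_trans IH').
  have Hc := cox_high (b := b) (a := a.+1) (d := d.+1) Hhi.
  rewrite Hc coxS Hba.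
  have Hc' := cox_high (b := b') (a := a.+2) (d := d) Hhi'.
  rewrite Hc' coxS Hb'2 coxS.
  have Eb' : b' a.+1 = false by rewrite /b' /upd; case: eqP => ?; [lia|by rewrite eqxx].
  rewrite Eb'.
  have Ec : cox b' a = cox b a.
    apply: cox_ext => k Hk. rewrite /b' /upd. case: eqP => ?; first lia. case: eqP => ?; first lia. done.
  rewrite Ec.
  set c := cox b a.
  have Hcw : pw a c := pw_cox b a.
  apply: (@conj_beq_l n ((a.+1, true) :: Hw a.+1 d.+1 ++ c)); last first.
    rewrite catA. apply: conj_rot. lia.
  rewrite Hw_last /=.
  have E2 : beq n ((a.+1, true) :: Hw a.+2 d) (Hw a.+2 d ++ [:: (a.+1, true)]).
    apply: (@comm_word n a.+1 a.+3 (a.+2 + d)) => //; try lia.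
    exact: Hw_range.
  have E3 : beq n ((a.+2, true) :: c) (c ++ [:: (a.+2, true)]).
    apply: (@comm_word_lo n a.+2 a) => //; lia.
  rewrite -catA -cat_cons E2 -!catA /= E3. done.
Qed.

Lemma cox_conj_all n m b : m <= n.-1 -> conjugate n (cox (fun _ => false) m) (cox b m).
Proof.
move=> Hm.
have key : forall k, k <= m ->
    conjugate n (cox (fun _ => false) m) (cox (fun j => (j <= k) && b j) m).
  elim=> [|k IH] Hk.
    rewrite (@cox_ext (fun j => (j <= 0) && b j) (fun _ => false)); first exact: conj_refl.
    move=> j Hj. have -> : (j <= 0) = false by lia. done.
  have IH' := IH (ltnW Hk).
  case: (boolP ((0 < k) && b k.+1)) => [/andP [Hk0 Hbk]|Hno].
  - have Hmt := @move_top n (m - k.+1) k.+1 (fun j => (j <= k.+1) && b j)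
        ltac:(lia) ltac:(lia) ltac:(by rewrite /= leqnn Hbk)
        ltac:(by move=> j Hj; have -> : (j <= k.+1) = false by lia).
    have Em : k.+1 + (m - k.+1) = m by lia.
    rewrite Em in Hmt. apply: (conj_trans IH'). move: Hmt.
    rewrite (@cox_ext (upd (fun j => (j <= k.+1) && b j) k.+1 false) (fun j => (j <= k) && b j)) //.
    move=> j Hj. rewrite /upd. case: eqP => [->|?]; first by rewrite ltnn.
    have -> : (j <= k.+1) = (j <= k) by lia. done.
  - rewrite (@cox_ext (fun j => (j <= k.+1) && b j) (fun j => (j <= k) && b j)) //.
    move=> j Hj. case: (eqVneq j k.+1) => [Ej|Ne].
      subst j. rewrite ltnn leqnn /=. move: Hno. case: (b k.+1) => //. rewrite andbT. lia.
    have -> : (j <= k.+1) = (j <= k) by lia. done.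
rewrite -(@cox_ext (fun j => (j <= m) && b j) b); first exact: key.
move=> j Hj. have -> : j <= m by lia. done.
Qed.

Lemma delta_cox n : delta n = cox (fun _ => false) n.-1.
Proof.
rewrite /delta. elim: n.-1 => [|m IH] //.
rewrite coxS -IH. by rewrite iotaS1 rev_cat.
Qed.

Set Implicit Arguments. Unset Strict Implicit.

Lemma fw_cox_inv b m :
  (forall x, (x == 0) || (m.+2 < x) -> fw (cox b m.+1) x = x) /\
  (forall x, 0 < x <= m.+2 -> 0 < fw (cox b m.+1) x <= m.+2 /\ fw (cox b m.+1) x != x) /\
  (forall k, 1 < k <= m.+1 -> (k < fw (cox b m.+1) k) = ~~ b k).
Proof.
elim: m => [|m [I1 [I2 I3]]].
  have -> : cox b 1 = [:: (1, true)] by rewrite coxS; case: (b 1).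
  split; [|split].
  - move=> x Hx. rewrite /fw /=. move: Hx. swap_tac.
  - move=> x Hx. rewrite /fw /=. move: Hx. split; swap_tac.
  - move=> k Hk. lia.
rewrite coxS. set F := fw (cox b m.+1) in I1 I2 I3 *. case Eb: (b m.+2).
-
  have EF : forall x, fw (cox b m.+1 ++ [:: (m.+2, true)]) x = swap m.+2 (F x).
    by move=> x; rewrite fw_cat.
  split; [|split].
  + move=> x Hx. rewrite EF I1; last lia. move: Hx. swap_tac.
  + move=> x Hx. rewrite EF.
    case: (leqP x m.+2) => Hxm.
      have [Ha Hb] := I2 x ltac:(lia). move: Ha Hb. set y := F x. split; move: Ha Hb; swap_tac.
    rewrite I1; last lia. split; move: Hx Hxm; swap_tac.
  + move=> k Hk. rewrite EF.
    case: (leqP k m.+1) => Hkm.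
      rewrite -I3; last lia. have [Ha Hb] := I2 k ltac:(lia). move: Ha Hb. set y := F k.
      move=> Ha Hb. move: Ha Hb Hk Hkm. swap_tac.
    have Ek : k = m.+2 by lia. subst k. rewrite Eb.
    have [Ha Hb] := I2 m.+2 ltac:(lia). move: Ha Hb. set y := F m.+2. swap_tac.
-
  have EF : forall x, fw ((m.+2, true) :: cox b m.+1) x = F (swap m.+2 x).
    by move=> x; rewrite fw_cons.
  split; [|split].
  + move=> x Hx. rewrite EF. have -> : swap m.+2 x = x by move: Hx; swap_tac.
    rewrite I1 //. lia.
  + move=> x Hx. rewrite EF.
    case: (leqP x m.+1) => Hxm.
      have -> : swap m.+2 x = x by move: Hx Hxm; swap_tac.
      have [Ha Hb] := I2 x ltac:(lia). split => //. lia.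
    case: (eqVneq x m.+2) => [->|Hne].
      have -> : swap m.+2 m.+2 = m.+3 by rewrite /swap eqxx.
      rewrite I1; last lia. lia.
    have Ex : x = m.+3 by lia. subst x.
    have -> : swap m.+2 m.+3 = m.+2 by swap_tac.
    have [Ha Hb] := I2 m.+2 ltac:(lia). move: Ha Hb. set y := F m.+2. move=> Ha Hb. lia.
  + move=> k Hk. rewrite EF.
    case: (leqP k m.+1) => Hkm.
      have -> : swap m.+2 k = k by move: Hk Hkm; swap_tac.
      rewrite I3 //. lia.
    have Ek : k = m.+2 by lia. subst k. rewrite Eb.
    have -> : swap m.+2 m.+2 = m.+3 by rewrite /swap eqxx.
    rewrite I1; last lia. lia.
Qed.

Lemma cox_distinct n b b' k : 1 < k <= n.-1 -> b k != b' k ->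
  ~ beq n (cox b n.-1) (cox b' n.-1).
Proof.
move=> Hk Hne H.
have := beq_fw H k.
case E: n.-1 Hk => [|m] Hk; first lia.
have [_ [_ I3]] := fw_cox_inv b m.
have [_ [_ I3']] := fw_cox_inv b' m.
move=> Efw. have := I3 k Hk. rewrite Efw I3' // => /(congr1 negb). rewrite !negbK => Eq.
by rewrite Eq eqxx in Hne.
Qed.

Set Implicit Arguments. Unset Strict Implicit.

Lemma fw_Dw k x : fw (Dw k) x = if 0 < x <= k then x.+1 else if x == k.+1 then 1 else x.
Proof.
elim: k x => [|k IH] x.
  rewrite /Dw /fw /=. have -> : (0 < x <= 0) = false by lia. by case: eqP => [->|].
rewrite DwS fw_cons IH /=.
case: (boolP (0 < x <= k.+1)) => H1; case: (boolP (0 < swap k.+1 x <= k)) => H2; move: H1 H2; swap_tac.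
Qed.

Lemma delta_Dw n : delta n = Dw n.-1.
Proof. by []. Qed.

Lemma fw_range n w x : valid n w -> 0 < x <= n -> 0 < fw w x <= n.
Proof.
elim: w x => [|l w IH] x //. rewrite valid_cons => /andP [Hl Hw] Hx.
rewrite fw_cons. apply: IH => //. move: Hl Hx. set i := l.1. swap_tac.
Qed.

Lemma fw_avoid j u x : all (fun l => (0 < l.1) && (l.1 != j)) u -> 0 < x <= j -> 0 < fw u x <= j.
Proof.
elim: u x => [|l u IH] x //. rewrite [all _ _]/= => /andP [Hl Hu] Hx.
rewrite fw_cons. apply: IH => //. move: Hl Hx. set i := l.1. swap_tac.
Qed.

Lemma all_letters n u w : 2 <= n -> valid n u -> valid n w ->
  beq n u (winv w ++ delta n ++ w) -> forall j, 0 < j <= n.-1 -> j \in map fst u.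
Proof.
move=> Hn Hu Hw H j Hj. apply/negPn/negP => Hnot.
pose F := fw u. pose g := fw w. pose h := fw (winv w). pose fd := fw (delta n).
have EF : forall x, F x = g (fd (h x)).
  move=> x. by rewrite /F (beq_fw H) !fw_cat.
have hg : forall x, h (g x) = x.
  move=> x. rewrite /h /g -fw_cat. by rewrite (beq_fw (winv_r Hw)).
have gh : forall x, g (h x) = x.
  move=> x. rewrite /h /g -fw_cat. by rewrite (beq_fw (winv_l Hw)).
have Eit : forall k x, iter k F x = g (iter k fd (h x)).
  elim=> [|k IHk] x /=; first by rewrite gh.
  by rewrite IHk EF hg.
have Hav : all (fun l => (0 < l.1) && (l.1 != j)) u.
  apply/allP => l Hl. move/allP: Hu => /(_ l Hl) /andP [-> _] /=.
  apply/eqP => E. move/negP: Hnot; apply. apply/mapP. by exists l.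
have Hb : forall k, 0 < iter k F 1 <= j.
  elim=> [|k IHk] /=; first lia. exact: fw_avoid.
have Hfd1 : forall x, 0 < x < n -> fd x = x.+1.
  move=> x Hx. rewrite /fd delta_Dw fw_Dw. case: ifP => //. lia.
have Hfdn : fd n = 1.
  rewrite /fd delta_Dw fw_Dw. case: ifP => [|_]; first lia. case: eqP => //. lia.
have Hit : forall t x, 0 < x -> x + t <= n -> iter t fd x = x + t.
  elim=> [|t IHt] x Hx Hxt /=; first by rewrite addn0.
  rewrite IHt //; last lia. rewrite Hfd1; lia.
have Vw' : valid n (winv w) by rewrite valid_winv.
have Hx0 : 0 < h 1 <= n by apply: fw_range; [|lia].
have Hy0 : 0 < h n <= n by apply: fw_range; [|lia].
set x0 := h 1 in Hx0. set y0 := h n in Hy0.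
have Hk : iter ((y0.-1) + (n - x0).+1) fd x0 = y0.
  rewrite iterD /= (Hit (n - x0) x0); [|lia|lia].
  have -> : x0 + (n - x0) = n by lia.
  rewrite Hfdn Hit; lia.
have := Hb ((y0.-1) + (n - x0).+1). rewrite Eit -/x0 Hk /y0 gh. lia.
Qed.

Import Order.TTheory GRing.Theory Num.Theory.
Set Implicit Arguments. Unset Strict Implicit.

Lemma mul_geN (p : int) (N : nat) : (0 < p)%R -> (N%:Z <= p * N%:Z)%R.
Proof.
move=> Hp. have : (0 <= (p - 1) * N%:Z)%R by apply: mulr_ge0; lia. lia.
Qed.
Lemma mul_le0 (p : int) (N : nat) : (p <= 0)%R -> (p * N%:Z <= 0)%R.
Proof.
move=> Hp. have : (0 <= (- p) * N%:Z)%R by apply: mulr_ge0; lia. lia.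
Qed.

Lemma size_Dw k : size (Dw k) = k.
Proof. by rewrite /Dw size_map size_rev size_iota. Qed.

Lemma size_DeltaS k : size (Delta k.+1) = size (Delta k) + k.
Proof. by rewrite DeltaS size_cat size_Dw. Qed.

Lemma size_Delta2 : size (Delta 2) = 1.
Proof. by rewrite size_DeltaS size_DeltaS. Qed.

Lemma size_Delta_ge n : 3 <= n -> n <= size (Delta n).
Proof.
elim: n => // n IH Hn. rewrite size_DeltaS.
case: (eqVneq n 2) => [->|Hne]; first by rewrite size_Delta2.
have := IH ltac:(lia). lia.
Qed.

Lemma size_Delta_pos n : 2 <= n -> 1 <= size (Delta n).
Proof.
move=> Hn. case: (eqVneq n 2) => [->|Hne]; first by rewrite size_Delta2.
have := size_Delta_ge (n := n) ltac:(lia). lia.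
Qed.

Lemma es_Delta n : es (Delta n) = Posz (size (Delta n)).
Proof. apply: es_pos. exact: pw_all (pw_Delta n). Qed.

Lemma es_nseq k w : es (flatten (nseq k w)) = (Posz k * es w)%R.
Proof.
elim: k => [|k IH] /=; first by rewrite mul0r.
rewrite es_cat IH. lia.
Qed.

Lemma es_Deltapow n p : es (Deltapow n p) = (p * Posz (size (Delta n)))%R.
Proof.
case: p => k /=; first by rewrite es_nseq es_Delta.
rewrite es_cat es_nseq es_winv es_Delta NegzE. lia.
Qed.

Lemma Deltapow0 n : Deltapow n 0 = [::].
Proof. by []. Qed.

Lemma size_cox b m : size (cox b m) = m.
Proof. elim: m => // m IH. rewrite coxS. case: (b m.+1); by rewrite ?size_cat /= IH ?addn1. Qed.

Lemma es_cox b m : es (cox b m) = Posz m.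
Proof. by rewrite es_pos ?size_cox // (pw_all (pw_cox b m)). Qed.

Lemma es_delta n : es (delta n) = Posz n.-1.
Proof. by rewrite delta_cox es_cox. Qed.

Lemma es_conj n X Y : conjugate n X Y -> es Y = es X.
Proof. move=> [w [_ H]]. rewrite (beq_es H) !es_cat es_winv. lia. Qed.

Lemma simple_es n y : simple n y -> ~ beq n y [::] -> ~ beq n y (Delta n) ->
  (1 <= es y)%R /\ (es y + 1 <= Posz (size (Delta n)))%R.
Proof.
move=> [Hv [Hp Hpre]] H0 HD. split.
  have := positive_es Hp. case: (eqVneq (es y) 0%R) => [E|Ne]; last lia.
  by have := positive_es0 Hp E.
have := positive_es Hpre. rewrite es_cat es_winv es_Delta.
case: (eqVneq (es y) (Posz (size (Delta n)))) => [E|Ne]; last lia.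
move=> _. exfalso. apply: HD.
have H1 : beq n (winv y ++ Delta n) [::].
  apply: (positive_es0 Hpre). rewrite es_cat es_winv es_Delta E. lia.
have E2 : beq n (Delta n) (y ++ winv y ++ Delta n) by rewrite catA (winv_r Hv).
by rewrite E2 (beq_catl y H1) cats0.
Qed.

Lemma es_flatten_ge n ys : (forall y, y \in ys -> simple n y /\ ~ beq n y [::] /\ ~ beq n y (Delta n)) ->
  (Posz (size ys) <= es (flatten ys))%R.
Proof.
elim: ys => [|y ys IH] H //=. rewrite es_cat.
have [Hs [H0 HD]] := H y (mem_head _ _). have [H1 _] := simple_es Hs H0 HD.
have := IH (fun z Hz => H z ltac:(by rewrite inE Hz orbT)).
move: H1. move: (es y) (es (flatten ys)) (size ys) => a b k. lia.
Qed.

Lemma cox_is_simple n b : 2 <= n -> simple n (cox b n.-1).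
Proof.
move=> Hn. have Hc := pw_cox b n.-1.
have Vc : valid n (cox b n.-1) := pw_valid (leqnn _) Hc.
split; first done. split.
  exists (cox b n.-1); split => //; split => //. exact: pw_all Hc.
have [y [Hy H]] := cox_simple b (m := n.-1) (n := n) ltac:(lia).
have En : n.-1.+1 = n by lia. rewrite En in H.
exists y; split; first by apply: pw_valid Hy; lia.
split; first exact: pw_all Hy.
rewrite /prefix H catA (winv_l Vc). done.
Qed.

Lemma cox_not_trivial n b : 2 <= n -> ~ beq n (cox b n.-1) [::].
Proof. move=> Hn /beq_es. rewrite es_cox /=. lia. Qed.

Lemma cox_not_Delta n b : 3 <= n -> ~ beq n (cox b n.-1) (Delta n).
Proof. move=> Hn /beq_es. rewrite es_cox es_Delta. have := size_Delta_ge Hn. lia. Qed.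

Lemma NF_c3 n b : 3 <= n -> NF n (cox b n.-1) 0 [:: cox b n.-1].
Proof.
move=> Hn. split; [|split; [|split]].
- by rewrite Deltapow0 /= cats0.
- move=> q /positive_es. rewrite es_cat es_Deltapow es_cox.
  have := size_Delta_ge Hn. move: (size (Delta n)) => N HN.
  have [Hq|Hq] : (q <= 0 \/ 0 < q)%R by lia. done. have := mul_geN N Hq. lia.
- move=> y. rewrite inE => /eqP ->. split; first by apply: cox_is_simple; lia.
  split; [apply: cox_not_trivial|apply: cox_not_Delta]; lia.
- move=> i Hi t Ht. have -> : i = 0 by case: i Hi.
  by rewrite /= cats0.
Qed.

Lemma NF_c2 n b : n = 2 -> NF n (cox b n.-1) 1 [::].
Proof.
move=> ->. split; [|split; [|split]] => //.
- by rewrite /= coxS; case: (b 1).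
- move=> q /positive_es. rewrite es_cat es_Deltapow es_cox size_Delta2. lia.
Qed.

Lemma NF_pos n Y p ys : NF n Y p ys -> positive n Y -> (0 <= p)%R.
Proof.
move=> [_ [Hmax _]] HY. apply: Hmax. rewrite oppr0 Deltapow0. done.
Qed.

Lemma canlen_cox n b r : 2 <= n -> canlen n (cox b n.-1) r -> r <= 1 /\ (n = 2 -> r = 0).
Proof.
move=> Hn [p [ys [HNF Hr]]]. subst r.
have Hp := NF_pos HNF (proj1 (proj2 (cox_is_simple b Hn))).
move: (HNF) => [HY [Hmax [Hys Hlw]]].
have Hes := beq_es HY. rewrite es_cat es_Deltapow es_cox in Hes.
have Hge := es_flatten_ge Hys.
case: (eqVneq n 2) => [E2|Ne2].
  subst n. case: ys Hys {Hlw Hge Hes HY HNF} => [|y ys] Hys; first by [].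
  have [Hs [H0 HD]] := Hys y (mem_head _ _).
  have := simple_es Hs H0 HD. rewrite size_Delta2. lia.
split => //; last lia.
have HN := size_Delta_ge (n := n) ltac:(lia).
move: (size (Delta n)) Hes HN => N Hes HN.
have Hp0 : p = 0%R.
  have [Hp'|Hp'] : (p <= 0 \/ 0 < p)%R by lia. lia.
  have := mul_geN N Hp'. move: Hge Hes. move: (es (flatten ys)) (size ys) => S k. lia.
subst p. rewrite Deltapow0 /= in HY.
clear HNF Hmax.
case: ys Hys Hlw HY Hes Hge => [|y1 ys] Hys Hlw HY Hes Hge; first by [].
have Hpre : Defs.prefix n (cox b n.-1) y1.
  apply: (Hlw 0 isT (cox b n.-1) (cox_is_simple b Hn)).
  rewrite /Defs.prefix drop0 -HY.
  exists [::]; split => //; split => //. apply: winv_l. exact: (proj1 (cox_is_simple b Hn)).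
have := positive_es Hpre. rewrite es_cat es_winv es_cox.
have Hrest := @es_flatten_ge n ys (fun z Hz => Hys z ltac:(by rewrite inE Hz orbT)).
move: Hes. rewrite /= es_cat. move: Hrest. rewrite /=. move: (es y1) (es (flatten ys)) (size ys) => a S k. lia.
Qed.

Lemma canlen_conj_pos n Z r : 3 <= n -> conjugate n (delta n) Z -> canlen n Z r -> 0 < r.
Proof.
move=> Hn Hc [p [ys [[HY _] Hr]]]. subst r. case: ys HY => [|y ys] HY //.
have := beq_es HY. rewrite es_cat es_Deltapow /= (es_conj Hc) es_delta addr0.
have := size_Delta_ge Hn. move: (size (Delta n)) => N HN.
have [Hp|Hp] : (p <= 0 \/ 0 < p)%R by lia.
  have := mul_le0 N Hp. lia.
have := mul_geN N Hp. lia.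
Qed.

Import Order.TTheory GRing.Theory Num.Theory.
Set Implicit Arguments. Unset Strict Implicit.

Lemma cox_USS n b : 2 <= n -> USS n (delta n) (cox b n.-1).
Proof.
move=> Hn. have Vc : valid n (cox b n.-1) := pw_valid (leqnn _) (pw_cox b n.-1).
split => //. split; first by rewrite delta_cox; apply: cox_conj_all.
split.
  move=> Z r r' _ HcZ Hr Hr'. have [H1 H2] := canlen_cox Hn Hr.
  case: (eqVneq n 2) => [E|Ne]; first by rewrite (H2 E).
  have := canlen_conj_pos (n := n) ltac:(lia) HcZ Hr'. lia.
exists 1; split => //. exists (cox b n.-1). split => //. split; last done.
case: (eqVneq n 2) => [E|Ne].
  exists 1%R, [::]. split; first exact: NF_c2. done.
exists 0%R, [:: cox b n.-1]. split; first by apply: NF_c3; lia.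
by rewrite oppr0 Deltapow0 /= cats0.
Qed.

Lemma canlen_delta n : 2 <= n -> canlen n (delta n) (if n == 2 then 0 else 1).
Proof.
move=> Hn. rewrite delta_cox. case: (eqVneq n 2) => [E|Ne].
  exists 1%R, [::]; split => //. exact: NF_c2.
exists 0%R, [:: cox (fun _ => false) n.-1]; split => //. apply: NF_c3; lia.
Qed.

Lemma USS_classify n Y : 2 <= n -> valid n Y -> USS n (delta n) Y ->
  exists b, beq n Y (cox b n.-1).
Proof.
move=> Hn Hv [_ [Hc [Hmin [m [Hm Hcyc]]]]].
case: m Hm Hcyc => // m _ [W [_ [[p [ys [HNF _]]] _]]].
have Hcl : canlen n Y (size ys) by exists p, ys.
have Hle := Hmin (delta n) _ _ (pw_valid (leqnn _) (eq_ind_r (pw n.-1) (pw_cox _ _) (delta_cox n)))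
  (@conj_refl n (delta n)) Hcl (canlen_delta Hn).
have HesY : es Y = Posz n.-1 by rewrite (es_conj Hc) es_delta.
move: (HNF) => [HY [_ [Hys _]]].
have HesY2 := beq_es HY. rewrite es_cat es_Deltapow HesY in HesY2.
case: (eqVneq n 2) => [E|Ne] in Hle *.
- subst n. case: ys Hle HY HesY2 {HNF Hcl Hys} => // _ HY HesY2.
  rewrite size_Delta2 /= in HesY2. have Ep : p = 1%R by lia. subst p.
  exists (fun _ => false). rewrite HY. done.
- have Hpos := canlen_conj_pos (n := n) ltac:(lia) Hc Hcl.
  case: ys Hle Hpos HY HesY2 Hys {HNF Hcl} => [|y1 [|y2 ys]] // _ _ HY HesY2 Hys.
  have [Hs [H0 HD]] := Hys y1 (mem_head _ _).
  have [Hy1 Hy2] := simple_es Hs H0 HD.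
  have HN := size_Delta_ge (n := n) ltac:(lia).
  rewrite /= cats0 in HY HesY2.
  have Ep : p = 0%R.
    move: HesY2 Hy1 Hy2 HN. move: (es y1) (size (Delta n)) => e N HesY2 Hy1 Hy2 HN.
    have [Hp|[Hp|Hp]] : (p = 0 \/ 0 < p \/ 0 < - p)%R by lia.
    + done.
    + have := mul_geN N Hp. lia.
    + have := mul_geN N Hp. lia.
  subst p. rewrite Deltapow0 /= in HY.
  move: (Hs) => [_ [[u [Vu [Au Hu]]] _]].
  have HYu : beq n Y u by rewrite HY Hu.
  have Hsize : size u = n.-1.
    have := beq_es HYu. rewrite HesY es_pos //. lia.
  move: Hc => [w [Vw Hw]].
  have Hlet := all_letters (u := u) (w := w) Hn Vu Vw ltac:(by rewrite -HYu).
  have Hmem : forall l, (l \in map fst u) = (0 < l <= n.-1).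
    move=> l. apply/idP/idP; last exact: Hlet.
    move/mapP => [l' Hl' ->]. by move/allP: Vu => /(_ l' Hl').
  have Huniq : uniq (map fst u).
    apply: (@leq_size_uniq _ (iota 1 n.-1)); first exact: iota_uniq.
      move=> l. rewrite mem_iota Hmem. lia.
    by rewrite size_map Hsize size_iota.
  have [b Hb] := cox_norm (leqnn _) Au Huniq Hmem.
  exists b. by rewrite HYu Hb.
Qed.

Unset Implicit Arguments.

Definition bitsf (t : seq bool) : nat -> bool := fun j => nth false t (j - 2).

Theorem corollary12 (n : nat) : 2 <= n -> card_Bn n (USS n (delta n)) (2 ^ (n - 2)).
Proof.
move=> Hn.
pose T := enum {: (n - 2).-tuple bool}.
pose t0 := nseq_tuple (n - 2) false.
have HsT : size T = 2 ^ (n - 2) by rewrite /T -cardE card_tuple card_bool.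
exists [seq cox (bitsf (val t)) n.-1 | t <- T].
split; first by rewrite size_map.
have Enth : forall i, i < 2 ^ (n - 2) ->
    nth [::] [seq cox (bitsf (val t)) n.-1 | t <- T] i = cox (bitsf (val (nth t0 T i))) n.-1.
  move=> i Hi. rewrite (nth_map t0) //. by rewrite HsT.
split.
  move=> i Hi. rewrite Enth //. split; last exact: cox_USS.
  exact: pw_valid (leqnn _) (pw_cox _ _).
split.
  move=> i j Hi Hj. rewrite !Enth // => Hbeq.
  apply/eqP. apply/negPn/negP => Hne.
  have Hneq : nth t0 T i != nth t0 T j.
    rewrite nth_uniq ?HsT //. rewrite /T. exact: enum_uniq.
  move/negP: Hneq; apply. apply/eqP. apply: val_inj.
  apply: (@eq_from_nth _ false); first by rewrite !size_tuple.
  move=> p. rewrite size_tuple => Hp.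
  apply/eqP. apply/negPn/negP => Hd.
  apply: (@cox_distinct n _ _ p.+2 _ _ Hbeq); first lia.
  rewrite /bitsf. have -> : p.+2 - 2 = p by lia. done.
move=> Y Hv HU.
have [b Hb] := USS_classify Hn Hv HU.
pose s := mkseq (fun p => b p.+2) (n - 2).
have Hs : size s == n - 2 by rewrite size_mkseq.
pose t : (n - 2).-tuple bool := Tuple Hs.
have Ht : t \in T by rewrite /T mem_enum.
exists (index t T). have Hi : index t T < 2 ^ (n - 2) by rewrite -HsT index_mem.
split => //. rewrite Enth // nth_index // Hb.
rewrite (@cox_ext b (bitsf (val t))) // => k Hk.
rewrite /bitsf /= /s nth_mkseq; last lia.
congr b. lia.
Qed.
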